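(* Let $f$ be a pairwise social choice correspondence that satisfies strong Condorcet-consistency, homogeneity, and strategyproofness. If $\mathrm{TC}(R)\subseteq f(R)$ for all profiles $R$, then $f$ is a robust dominant set rule.
   Context: Let $A$ be a finite set of alternatives; a preference profile $R$ assigns a strict total order $\succ_i$ on $A$ to each voter $i$ of a finite non-empty electorate $N\subseteq\{1,2,\dots\}$; $\mathcal{R}^*(A)$ is the set of all profiles over all electorates. $g_R(x,y)=|\{i: x\succ_i y\}|-|\{i: y\succ_i x\}|$; $x\succsim_R y$ iff $g_R(x,y)\ge0$, with strict part $\succ_R$. A Condorcet winner is $x$ with $x\succ_R y$ for all $y\ne x$. A non-empty $X$ is dominant in $R$ if $x\succ_R y$ for all $x\in X,y\notin X$; $\mathrm{TC}(R)$ is the inclusion-smallest dominant set. An SCC is $f:\mathcal{R}^*(A)\to 2^A\setminus\{\emptyset\}$; pairwise: $f(R)=f(R')$ whenever $g_R=g_{R'}$; homogeneous: $f(kR)=f(R)$ where $kR$ is $k$ copies of $R$; strongly Condorcet-consistent: $f(R)=\{x\}$ iff $x$ is the Condorcet winner in $R$. Fishburn's extension: for $X\ne Y$, $X\succ_i^F Y$ iff $x\succ_i y$ for all $x\in X\setminus Y,y\in Y$ and for all $x\in X,y\in Y\setminus X$; $f$ is strategyproof if no voter $i$ can change only his own preference to move from $R$ to $R'$ with $f(R')\succ_i^F f(R)$. $f$ is a dominant set rule if $f(R)$ is dominant in $R$ for all $R$; it is robust if $f(R')\subseteq f(R)$ whenever $f(R)$ is dominant in $R'$. *)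

(* Defs.v *)
From HB Require Import structures.
From mathcomp Require Import all_boot all_order all_algebra.
From mathcomp Require Import finmap.
Set Implicit Arguments. Unset Strict Implicit. Unset Printing Implicit Defensive.
Import Order.TTheory GRing.Theory Num.Theory.
Local Open Scope fset_scope.
Local Open Scope fmap_scope.

Section SCC.
Variable A : finType.

(* A strict total order on A: an enumeration of A, best alternative first. *)
Definition ranking := {t : #|A|.-tuple A | uniq t}.

Definition prefers (r : ranking) (x y : A) : bool :=
  (index x (val (val r)) < index y (val (val r)))%N.

(* A (raw) profile: finite map from voter names to rankings.
   Its domain is the electorate. *)
Definition rprofile := {fmap nat -> ranking}.

Definition valid (R : rprofile) : bool := (domf R != fset0) && (0%N \notin domf R).

Definition vpref (R : rprofile) (i : nat) (x y : A) : bool :=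
  if R.[? i] is Some r then prefers r x y else false.

Definition g (R : rprofile) (x y : A) : int :=
  \sum_(i <- domf R) ((vpref R i x y)%:Z - (vpref R i y x)%:Z).

Definition condorcet_winner (R : rprofile) (x : A) : Prop :=
  forall y, y != x -> (0 < g R x y)%R.

Definition dominant (R : rprofile) (X : {set A}) : Prop :=
  X != set0 /\ forall x y, x \in X -> y \notin X -> (0 < g R x y)%R.

Definition is_TC (R : rprofile) (X : {set A}) : Prop :=
  dominant R X /\ forall Y, dominant R Y -> X \subset Y.

(* k copies of R: voter i of copy j (0 <= j < k) is renamed i + j*m,
   where m is the largest voter name of R (names are >= 1, so no clash). *)
Definition kcopy (k : nat) (R : rprofile) : rprofile :=
  let m := (\max_(i <- domf R) i)%N in
  foldr (fun p (acc : rprofile) =>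
           if R.[? p.2] is Some r then acc.[p.1 <- r] else acc)
        [fmap]
        [seq ((i + j * m)%N, i) | i <- domf R, j <- iota 0 k].

Definition fishburn (r : ranking) (X Y : {set A}) : Prop :=
  X != Y /\
  (forall x y, x \in X :\: Y -> y \in Y -> prefers r x y) /\
  (forall x y, x \in X -> y \in Y :\: X -> prefers r x y).

Variable f : rprofile -> {set A}.

Definition is_SCC : Prop := forall R, valid R -> f R != set0.

Definition pairwise_scc : Prop :=
  forall R R', valid R -> valid R' -> (forall x y, g R x y = g R' x y) -> f R = f R'.

Definition homogeneous : Prop :=
  forall R k, valid R -> (0 < k)%N -> f (kcopy k R) = f R.

Definition strongly_condorcet_consistent : Prop :=
  forall R x, valid R -> (f R = [set x] <-> condorcet_winner R x).

Definition strategyproof : Prop :=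
  forall R i ri r, valid R -> R.[? i] = Some ri -> ~ fishburn ri (f R.[i <- r]) (f R).

Definition dominant_set_rule : Prop := forall R, valid R -> dominant R (f R).

Definition robust : Prop :=
  forall R R', valid R -> valid R' -> dominant R' (f R) -> f R' \subset f R.

End SCC.

(* Main.v *)
Require Import Defs.
From HB Require Import structures.
From mathcomp Require Import all_boot all_order all_algebra.
From mathcomp Require Import finmap.
From mathcomp Require Import zify.
Set Implicit Arguments. Unset Strict Implicit. Unset Printing Implicit Defensive.
Import Order.TTheory GRing.Theory Num.Theory.
Local Open Scope fset_scope.
Local Open Scope fmap_scope.
Local Open Scope ring_scope.
Definition srt (A : finType) (s : A -> nat) : seq A :=
  sort (fun x y => (s x <= s y)%N) (enum A).

Lemma srt_size (A : finType) (s : A -> nat) : size (srt s) == #|A|.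
Proof. by rewrite /srt size_sort cardE. Qed.

Definition mktup (A : finType) (s : A -> nat) : #|A|.-tuple A := Tuple (srt_size s).

Lemma mktup_uniq (A : finType) (s : A -> nat) : uniq (mktup s).
Proof. by rewrite /= /srt sort_uniq enum_uniq. Qed.

Definition mkrank (A : finType) (s : A -> nat) : ranking A :=
  exist (fun t : #|A|.-tuple A => uniq t) (mktup s) (mktup_uniq s).

Lemma prefers_mk (A : finType) (s : A -> nat) x y : injective s ->
  prefers (mkrank s) x y = (s x < s y)%N.
Proof.
move=> sinj; rewrite /prefers /=.
have tr : transitive (fun x y : A => (s x <= s y)%N) by move=> ? ? ? /leq_trans; apply.
have tot : total (fun x y : A => (s x <= s y)%N) by move=> ? ?; apply: leq_total.
have so : sorted (fun x y : A => (s x <= s y)%N) (srt s) by apply: sort_sorted.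
have mx : x \in srt s by rewrite mem_sort mem_enum.
have my : y \in srt s by rewrite mem_sort mem_enum.
apply/idP/idP => H.
- have := sorted_ltn_index tr so x y mx my H; rewrite leq_eqVlt => /orP [/eqP E|//].
  by move: H; rewrite (sinj _ _ E) ltnn.
- rewrite ltnNge; apply/negP => H2.
  have := sorted_leq_index tr (fun z => leqnn (s z)) so y x my mx H2.
  by rewrite leqNgt H.
Qed.

Definition term (A : finType) (r : ranking A) (x y : A) : int :=
  (prefers r x y)%:Z - (prefers r y x)%:Z.

Definition T (A : finType) (R : rprofile A) i (x y : A) : int :=
  (vpref R i x y)%:Z - (vpref R i y x)%:Z.

Lemma T_set (A : finType) (R : rprofile A) i r k x y :
  T (R.[i <- r]) k x y = if k == i then term r x y else T R k x y.
Proof. by rewrite /T /vpref fnd_set; case: (k == i). Qed.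

Lemma g_setf_new (A : finType) (R : rprofile A) i r x y : i \notin domf R ->
  g (R.[i <- r]) x y = (g R x y + term r x y)%R.
Proof.
move=> iN; rewrite /g dom_setf big_fsetU1 //.
have -> : (vpref R.[i <- r] i x y)%:Z - (vpref R.[i <- r] i y x)%:Z = term r x y.
  by have := T_set R i r i x y; rewrite eqxx.
rewrite addrC; congr (_ + _); apply: eq_big_seq => k kin.
have := T_set R i r k x y; rewrite /T => ->.
by case: eqP => // E; move: iN; rewrite -E kin.
Qed.

Lemma g_split (A : finType) (R : rprofile A) i x y : i \in domf R ->
  g R x y = (T R i x y + \sum_(k <- domf R | k != i) T R k x y)%R.
Proof. by move=> iin; rewrite /g (bigD1_seq i) // fset_uniq. Qed.

Lemma g_setf_old (A : finType) (R : rprofile A) i r0 r x y : R.[? i] = Some r0 ->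
  g (R.[i <- r]) x y = (g R x y - term r0 x y + term r x y)%R.
Proof.
move=> Ri.
have iin : i \in domf R by rewrite -fndSome Ri.
have iin' : i \in domf R.[i <- r] by rewrite dom_setf fsetU11.
rewrite (g_split x y iin') (g_split x y iin) T_set eqxx.
have -> : T R i x y = term r0 x y by rewrite /T /vpref Ri.
have -> : domf R.[i <- r] = domf R.
  by apply/fsetP => k; rewrite dom_setf !inE; case: eqP => // ->.
have -> : \sum_(k <- domf R | k != i) T R.[i <- r] k x y =
           \sum_(k <- domf R | k != i) T R k x y.
  by apply: eq_bigr => k kni; rewrite T_set (negPf kni).
set S := \sum_(k <- _ | _) _.
lia.
Qed.

Lemma g_anti (A : finType) (R : rprofile A) x y : g R y x = (- g R x y)%R.
Proof. by rewrite /g -sumrN; apply: eq_bigr => k _; rewrite opprB. Qed.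

Definition Fd (A : finType) (R : rprofile A) (L : seq (nat * nat)) : rprofile A :=
  foldr (fun p (acc : rprofile A) =>
           if R.[? p.2] is Some r then acc.[p.1 <- r] else acc) [fmap] L.

Lemma Fd_prop (A : finType) (R : rprofile A) (L : seq (nat * nat)) :
  (forall p, p \in L -> p.2 \in domf R) -> uniq (map fst L) ->
  (forall v, (v \in domf (Fd R L)) = (v \in map fst L)) /\
  (forall x y, g (Fd R L) x y = \sum_(p <- L) T R p.2 x y).
Proof.
elim: L => [|p L IH] HL U.
  split => [v|x y]; first by rewrite domf0 inE.
  by rewrite big_nil /g domf0 big_seq_fset0.
move: U => /= /andP [pN U].
have HL2 : forall q, q \in L -> q.2 \in domf R.
  by move=> q qin; apply: HL; rewrite inE qin orbT.
have [IH1 IH2] := IH HL2 U.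
have p2 : p.2 \in domf R by apply: HL; rewrite inE eqxx.
case E: R.[? p.2] => [r|]; last by move: E; rewrite (in_fnd p2).
have pN' : p.1 \notin domf (Fd R L) by rewrite IH1.
split => [v|x y].
  by rewrite dom_setf !inE IH1.
rewrite g_setf_new // IH2 big_cons addrC; congr (_ + _).
by rewrite /T /vpref E.
Qed.

Lemma iter_add (c : int) n : iter n (+%R c) 0 = c *+ n.
Proof. by elim: n => //= n ->; rewrite mulrS. Qed.

Lemma kcopy_prop (A : finType) (R : rprofile A) k : valid R -> (0 < k)%N ->
  valid (kcopy k R) /\ (forall x y, g (kcopy k R) x y = g R x y *+ k).
Proof.
move=> /andP [ne z0] k0.
set m := (\max_(i <- domf R) i)%N.
set L := [seq ((i + j * m)%N, i) | i <- domf R, j <- iota 0 k].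
have -> : kcopy k R = Fd R L by [].
have HL : forall p, p \in L -> p.2 \in domf R.
  by move=> p /allpairsP [[i j] [/= ii _ ->]].
have im : forall i, i \in domf R -> (0 < i <= m)%N.
  move=> i ii; have := @leq_bigmax_seq _ (enum_fset (domf R)) xpredT (fun i => i) i ii erefl.
  rewrite -/m => ->; rewrite andbT lt0n.
  by apply: contraNneq z0 => <-.
have U : uniq (map fst L).
  rewrite map_allpairs /=; apply: allpairs_uniq; rewrite ?fset_uniq ?iota_uniq //.
  move=> [i j] [i' j'] /allpairsP [[i1 j1] [/= i1in j1in [-> ->]]].
  move=> /allpairsP [[i2 j2] [/= i2in j2in [-> ->]]] /= E.
  have := im _ i1in; have := im _ i2in => H1 H2.
  have [lt|gt|eq] := ltngtP j1 j2.
  - exfalso; have : (j1 * m + m <= j2 * m)%N by rewrite -mulSnr leq_mul2r lt orbT.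
    by lia.
  - exfalso; have : (j2 * m + m <= j1 * m)%N by rewrite -mulSnr leq_mul2r gt orbT.
    by lia.
  - by rewrite eq in E *; congr pair; lia.
have [D G] := Fd_prop HL U.
split.
  apply/andP; split.
    case/fset0Pn: ne => i ii; apply/fset0Pn; exists i.
    rewrite D map_allpairs; apply/allpairsP; exists (i, 0%N).
    by rewrite /= ii mem_iota /= k0 mul0n addn0.
  rewrite D map_allpairs; apply/negP => /allpairsP [[i j] [/= ii _]].
  by have := im _ ii; lia.
move=> x y; rewrite G big_allpairs_dep /= /g -sumrMnl.
apply: eq_bigr => i _.
by rewrite big_const_seq count_predT size_iota iter_add.
Qed.

Definition score (A : finType) (k : A -> nat) (x : A) : nat :=
  (k x * #|A| + enum_rank x)%N.

Lemma score_inj (A : finType) (k : A -> nat) : injective (score k).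
Proof.
move=> x y E.
have N0 : (0 < #|A|)%N by apply/card_gt0P; exists x.
have := congr1 (fun n => n %% #|A|)%N E.
rewrite /score !modnMDl !modn_small ?ltn_ord // => /val_inj.
exact: enum_rank_inj.
Qed.

Lemma score_lt (A : finType) (k : A -> nat) x y : (k x < k y)%N -> (score k x < score k y)%N.
Proof.
move=> H; rewrite /score.
have h1 : (enum_rank x < #|A|)%N by apply: ltn_ord.
have : (k x * #|A| + #|A| <= k y * #|A|)%N by rewrite -mulSnr leq_mul2r H orbT.
lia.
Qed.

Lemma pref_key (A : finType) (k : A -> nat) x y : k x <> k y ->
  prefers (mkrank (score k)) x y = (k x < k y)%N.
Proof.
move=> ne; rewrite prefers_mk; last exact: score_inj.
have [lt|gt|eq] := ltngtP (k x) (k y).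
- exact: score_lt.
- by apply/negbTE; rewrite -leqNgt ltnW // score_lt.
- by [].
Qed.

Definition kswap (A : finType) (k : A -> nat) (a b : A) (x : A) : nat :=
  if x == a then k b else if x == b then k a else k x.

Definition keyok (A : finType) (k : A -> nat) (a b : A) : Prop :=
  k b = (k a).+1 /\ (forall x, x != a -> k x <> k a) /\ (forall x, x != b -> k x <> k b).

Definition delta (A : finType) (a b x y : A) : int :=
  if (x == b) && (y == a) then 2 else if (x == a) && (y == b) then -2 else 0.

Lemma term_swap (A : finType) (k : A -> nat) a b x y : a != b -> keyok k a b ->
  term (mkrank (score (kswap k a b))) x y =
  term (mkrank (score k)) x y + delta a b x y.
Proof.
move=> ab [kb [ka1 kb1]].
have ba : b != a by rewrite eq_sym.
have Hsw : forall z, z != a -> z != b -> score (kswap k a b) z = score k z.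
  by move=> z za zb; rewrite /score /kswap (negPf za) (negPf zb).
have Ka : kswap k a b a = k b by rewrite /kswap eqxx.
have Kb : kswap k a b b = k a by rewrite /kswap (negPf ba) eqxx.
have Ko : forall z, z != a -> z != b -> kswap k a b z = k z.
  by move=> z za zb; rewrite /kswap (negPf za) (negPf zb).
rewrite /term /delta.
have KO : forall z, z != a -> z != b -> (k z <> k a /\ k z <> (k a).+1) /\ kswap k a b z = k z.
  by move=> z za zb; split; [split; [exact: ka1|rewrite -kb; exact: kb1] | exact: Ko].
case: (eqVneq x a) => [->|xa].
  case: (eqVneq y b) => [->|yb].
    rewrite (negPf ab) /= !pref_key ?Ka ?Kb; lia.
  case: (eqVneq y a) => [->|ya].
    rewrite (negPf ab) /= /prefers ltnn; lia.
  have [[k1 k2] k3] := KO y ya yb.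
  rewrite (negPf ab) /= !pref_key ?Ka ?k3; lia.
case: (eqVneq x b) => [->|xb].
  case: (eqVneq y a) => [->|ya].
    rewrite /= !pref_key ?Ka ?Kb; lia.
  case: (eqVneq y b) => [->|yb].
    rewrite /= /prefers ltnn; lia.
  have [[k1 k2] k3] := KO y ya yb.
  rewrite /= !pref_key ?Kb ?k3; lia.
have [[k1 k2] k3] := KO x xa xb.
case: (eqVneq y a) => [->|ya].
  rewrite /= !pref_key ?Ka ?k3; lia.
case: (eqVneq y b) => [->|yb].
  rewrite /= !pref_key ?Kb ?k3; lia.
rewrite /= addr0 !prefers_mk ?Hsw //; exact: score_inj.
Qed.

Definition srev (A : finType) (k : A -> nat) (x : A) : nat :=
  ((\max_(z : A) score k z) - score k x)%N.

Lemma srev_pref (A : finType) (k : A -> nat) x y :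
  prefers (mkrank (srev k)) x y = prefers (mkrank (score k)) y x.
Proof.
rewrite /srev; set M := (\max_(z : A) score k z).
have le : forall z, (score k z <= M)%N by move=> z; apply: leq_bigmax.
have inj : injective (fun z => M - score k z)%N.
  move=> u v /= E; apply: (@score_inj _ k).
  have := le u; have := le v; lia.
rewrite !prefers_mk //; last exact: score_inj.
have := le x; have := le y; lia.
Qed.

Lemma term_rev (A : finType) (k : A -> nat) x y :
  term (mkrank (srev k)) x y = - term (mkrank (score k)) x y.
Proof. by rewrite /term !srev_pref opprB. Qed.

Definition fresh (A : finType) (R : rprofile A) : nat := (\max_(v <- domf R) v).+1.

Lemma fresh_notin (A : finType) (R : rprofile A) n : (fresh R <= n)%N -> n \notin domf R.
Proof.
move=> H; apply/negP => nin.
have := @leq_bigmax_seq _ (enum_fset (domf R)) xpredT (fun i => i) n nin erefl.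
rewrite /fresh in H. move=> h. by have := leq_ltn_trans h H; rewrite ltnn.
Qed.

Definition prof1 (A : finType) (R : rprofile A) (k : A -> nat) : rprofile A :=
  R.[fresh R <- mkrank (score k)].[(fresh R).+1 <- mkrank (srev k)].

Definition prof2 (A : finType) (R : rprofile A) (k : A -> nat) (a b : A) : rprofile A :=
  (prof1 R k).[fresh R <- mkrank (score (kswap k a b))].

Lemma prof1_fnd (A : finType) (R : rprofile A) k :
  (prof1 R k).[? fresh R] = Some (mkrank (score k)).
Proof. by rewrite /prof1 !fnd_set eqxx; case: eqP => //; lia. Qed.

Lemma prof1_valid (A : finType) (R : rprofile A) k : valid R -> valid (prof1 R k).
Proof.
move=> /andP [_ z0]; apply/andP; split.
  by apply/fset0Pn; exists (fresh R).+1; rewrite /prof1 dom_setf fsetU11.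
by rewrite /prof1 !dom_setf !inE negb_or z0 /fresh.
Qed.

Lemma prof2_valid (A : finType) (R : rprofile A) k a b : valid R -> valid (prof2 R k a b).
Proof.
move=> /(prof1_valid k) /andP [ne z0]; apply/andP; split.
  by apply/fset0Pn; exists (fresh R); rewrite /prof2 dom_setf fsetU11.
by rewrite /prof2 dom_setf in_fset1U negb_or z0 andbT /fresh.
Qed.

Lemma prof1_g (A : finType) (R : rprofile A) k x y : g (prof1 R k) x y = g R x y.
Proof.
rewrite /prof1 g_setf_new; last first.
  by rewrite dom_setf !inE negb_or fresh_notin // andbT; apply/eqP; lia.
rewrite g_setf_new ?fresh_notin // term_rev; lia.
Qed.

Lemma prof2_g (A : finType) (R : rprofile A) k a b x y : a != b -> keyok k a b ->
  g (prof2 R k a b) x y = g R x y + delta a b x y.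
Proof.
move=> ab ok; rewrite /prof2 (g_setf_old _ _ _ (prof1_fnd R k)) prof1_g term_swap //.
lia.
Qed.

Lemma sp_step (A : finType) (f : rprofile A -> {set A}) :
  pairwise_scc f -> strategyproof f ->
  forall R R' a b k, valid R -> valid R' -> a != b -> keyok k a b ->
  (forall x y, g R' x y = g R x y + delta a b x y) ->
  ~ fishburn (mkrank (score k)) (f R') (f R).
Proof.
move=> pw sp R R' a b k vR vR' ab ok HR'.
have E1 : f (prof1 R k) = f R by apply: pw => //; [exact: prof1_valid | exact: prof1_g].
have E2 : f (prof2 R k a b) = f R'.
  apply: pw => //; first exact: prof2_valid.
  by move=> x y; rewrite prof2_g // HR'.
rewrite -E1 -E2.
exact: (sp (prof1 R k) (fresh R) _ (mkrank (score (kswap k a b))) (prof1_valid k vR) (prof1_fnd R k)).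
Qed.

Definition mkkey (A : finType) (a b : A) (ka : nat) (h : A -> nat) (x : A) : nat :=
  if x == a then ka else if x == b then ka.+1 else h x.

Lemma keyok_mk (A : finType) (a b : A) ka h : a != b ->
  (forall x, x != a -> x != b -> h x <> ka /\ h x <> ka.+1) -> keyok (mkkey a b ka h) a b.
Proof.
move=> ab H.
have ba : (b == a) = false by rewrite eq_sym (negPf ab).
rewrite /keyok /mkkey eqxx ba eqxx.
split => //; split => x xn.
  case: ifP => [/eqP xa|_]; first by rewrite xa eqxx in xn.
  case: ifP => [_|xb]; first lia.
  by case: (H x xn (negbT xb)).
case: ifP => [_|xa]; first lia.
case: ifP => [/eqP xb|_]; first by rewrite xb eqxx in xn.
by case: (H x (negbT xa) xn).
Qed.

Lemma step_ex (A : finType) (R : rprofile A) a b : valid R -> a != b ->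
  exists R', valid R' /\ forall x y, g R' x y = g R x y + delta a b x y.
Proof.
move=> vR ab; exists (prof2 R (mkkey a b 1 (fun _ => 0%N)) a b); split.
  exact: prof2_valid.
by move=> x y; rewrite prof2_g //; apply: keyok_mk.
Qed.

Definition e (A : finType) (R : rprofile A) : rel A := fun x y => 0 <= g R x y.

Definition TCs (A : finType) (R : rprofile A) : {set A} :=
  [set a | [forall b, connect (e R) a b]].

Lemma e_tot (A : finType) (R : rprofile A) x y : ~~ e R x y -> e R y x.
Proof. rewrite /e g_anti; lia. Qed.

Lemma TC_pred (A : finType) (R : rprofile A) a b :
  a \in TCs R -> e R b a -> b \in TCs R.
Proof.
rewrite !inE => /forallP H eba; apply/forallP => c.
exact: connect_trans (connect1 eba) (H c).
Qed.

Lemma TC_out (A : finType) (R : rprofile A) a b :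
  a \in TCs R -> b \notin TCs R -> 0 < g R a b.
Proof.
move=> aT bT; have : ~~ e R b a by apply: contra bT => eba; apply: TC_pred aT eba.
rewrite /e g_anti; lia.
Qed.

Lemma TC_ne (A : finType) (R : rprofile A) (x0 : A) : TCs R != set0.
Proof.
pose sz a := #|[set b | connect (e R) a b]|.
have [a _ amax] := @arg_maxnP A x0 xpredT sz erefl.
apply/set0Pn; exists a; rewrite inE; apply/forallP => b.
apply/negPn/negP => nab.
have eba : e R b a by apply: e_tot; apply: contra nab; apply: connect1.
have : (sz a < sz b)%N.
  apply: proper_card; apply/properP; split.
    apply/subsetP => c; rewrite !inE; exact: connect_trans (connect1 eba).
  by exists b; rewrite !inE ?connect0.
have := amax b erefl. lia.
Qed.

Lemma TC_sub_dom (A : finType) (R : rprofile A) Y : dominant R Y -> TCs R \subset Y.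
Proof.
move=> [Yne Ydom]; apply/subsetP => a; rewrite inE => /forallP H.
case/set0Pn: Yne => y yY.
have := H y; case/connectP => p pth yl; rewrite yl in yY; clear yl H.
elim: p a pth yY => [|c p IH] a /=; first by [].
move=> /andP [eac pth] lY; have cY := IH c pth lY.
apply/negPn/negP => aY; have := Ydom c a cY aY.
by move: eac; rewrite /e g_anti; lia.
Qed.

Lemma TC_is (A : finType) (R : rprofile A) (x0 : A) : is_TC R (TCs R).
Proof.
split; last exact: TC_sub_dom.
split; first exact: TC_ne x0.
by move=> x y xT yT; apply: TC_out.
Qed.

Lemma TC_mono (A : finType) (R R' : rprofile A) :
  (forall x y, 0 <= g R x y -> 0 <= g R' x y) -> TCs R \subset TCs R'.
Proof.
move=> H; apply/subsetP => a; rewrite !inE => /forallP Ha; apply/forallP => b.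
apply: (connect_sub _ (Ha b)) => x y exy; apply: connect1; exact: H.
Qed.

Lemma pref_lt (A : finType) (k : A -> nat) x y : (k x < k y)%N -> prefers (mkrank (score k)) x y.
Proof. by move=> H; rewrite pref_key ?H //; lia. Qed.

Lemma neq_of (A : finType) (S : {set A}) x y : x \in S -> y \notin S -> (y == x) = false.
Proof. by move=> xS yS; apply/negbTE; apply: contraNneq yS => ->. Qed.

Lemma lemK (A : finType) (f : rprofile A -> {set A}) :
  pairwise_scc f -> strategyproof f ->
  forall R R' a b, valid R -> valid R' -> a != b ->
  (forall x y, g R' x y = g R x y + delta a b x y) ->
  a \in f R -> a \in f R' -> b \in f R -> f R' = f R.
Proof.
move=> pw sp R R' a b vR vR' ab HR' aP aQ bP.
apply/eqP; apply: contraT => QP.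
pose h x := if x \in f R' :\: f R then 0%N else if x \in f R :&: f R' then 4%N
            else if x \in f R :\: f R' then 8%N else 12%N.
have hok : forall x, x != a -> x != b -> h x <> 6%N /\ h x <> 7%N.
  by move=> x _ _; rewrite /h; do 3 case: ifP => _ //.
exfalso; apply: (sp_step pw sp vR vR' ab (keyok_mk ab hok) HR').
split => //; split.
- move=> x y; rewrite !inE => /andP [xP xQ] yP; apply: pref_lt.
  rewrite /mkkey /h (neq_of aP xP) (neq_of bP xP) !inE xP xQ yP /=.
  by case: ifP => // _; case: ifP => // _; case: (y \in f R').
- move=> x y xQ; rewrite !inE => /andP [yQ yP]; apply: pref_lt.
  rewrite /mkkey /h (neq_of aQ yQ) !inE (negPf yQ) yP /=.
  case: ifP => [_|xa]; first by case: ifP.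
  case: ifP => [/eqP xb|xb]; first by rewrite -xb (neq_of xQ yQ).
  by rewrite xQ; case: (x \in f R); case: ifP.
Qed.

Lemma neq_ofr (A : finType) (S : {set A}) x y : x \in S -> y \notin S -> (x == y) = false.
Proof. by move=> xS yS; apply/negbTE; apply: contraNneq yS => <-. Qed.

Lemma lemM1 (A : finType) (f : rprofile A -> {set A}) :
  pairwise_scc f -> strategyproof f ->
  forall R R' a b, valid R -> valid R' -> a != b ->
  (forall x y, g R' x y = g R x y + delta a b x y) ->
  a \notin f R -> (f R' \subset f R \/ f R \subset f R') -> f R' = f R.
Proof.
move=> pw sp R R' a b vR vR' ab HR' aP [QsP|PsQ];
  apply/eqP; apply: contraT => QP; exfalso.
- pose h x := if x \in f R' then 8%N else 12%N.
  have hok : forall x, x != a -> x != b -> h x <> 9%N /\ h x <> 10%N.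
    by move=> x _ _; rewrite /h; case: ifP.
  apply: (sp_step pw sp vR vR' ab (keyok_mk ab hok) HR').
  split => //; split.
  + move=> x y; rewrite !inE => /andP [xP xQ].
    by rewrite (subsetP QsP x xQ) in xP.
  + move=> x y xQ; rewrite !inE => /andP [yQ yP]; apply: pref_lt.
    have aQ : a \notin f R' by apply: contra aP; apply: (subsetP QsP).
    rewrite /mkkey /h (neq_ofr xQ aQ) (neq_ofr yP aP) (negPf yQ) xQ.
    case: ifP => [/eqP xb|xb]; first by rewrite -xb (neq_of xQ yQ).
    by case: ifP.
- pose h x := if x \in f R then 8%N else 4%N.
  have hok : forall x, x != a -> x != b -> h x <> 5%N /\ h x <> 6%N.
    by move=> x _ _; rewrite /h; case: ifP.
  apply: (sp_step pw sp vR vR' ab (keyok_mk ab hok) HR').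
  split => //; split.
  + move=> x y; rewrite !inE => /andP [xP xQ] yP; apply: pref_lt.
    rewrite /mkkey /h (neq_ofr yP aP) (negPf xP) yP.
    case: ifP => [_|xa]; first by case: ifP.
    case: ifP => [/eqP xb|xb]; first by rewrite -xb (neq_ofr yP xP).
    by case: ifP.
  + move=> x y xQ; rewrite !inE => /andP [yQ yP].
    by rewrite (subsetP PsQ y yP) in yQ.
Qed.

Lemma delta_ab (A : finType) (a b : A) : a != b -> delta a b a b = -2.
Proof. by move=> ab; rewrite /delta (negPf ab) /= !eqxx. Qed.

Lemma delta_ba (A : finType) (a b : A) : a != b -> delta a b b a = 2.
Proof. by move=> ab; rewrite /delta !eqxx. Qed.

Lemma delta_ge (A : finType) (a b x : A) y : x != a -> 0 <= delta a b x y.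
Proof. by move=> xa; rewrite /delta (negPf xa) /=; case: ifP. Qed.

Lemma delta_0 (A : finType) (a b x y : A) :
  ~~ (((x == a) && (y == b)) || ((x == b) && (y == a))) -> delta a b x y = 0.
Proof. by rewrite /delta negb_or => /andP [/negPf -> /negPf ->]. Qed.

Lemma delta_ge2 (A : finType) (a b x y : A) : ~~ ((x == a) && (y == b)) -> 0 <= delta a b x y.
Proof. by rewrite /delta => /negPf ->; case: ifP. Qed.

Lemma elt_of (A : finType) (f : rprofile A -> {set A}) R :
  is_SCC f -> valid R -> exists x0 : A, x0 \in f R.
Proof. by move=> h vR; case/set0Pn: (h R vR) => x0 ?; exists x0. Qed.

Lemma TC_f (A : finType) (f : rprofile A -> {set A}) R :
  is_SCC f -> (forall R X, valid R -> is_TC R X -> X \subset f R) ->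
  valid R -> TCs R \subset f R.
Proof.
move=> h tc vR; have [x0 _] := elt_of h vR; exact: tc _ _ vR (TC_is R x0).
Qed.

Lemma ar1 (n : nat) : 0 <= (n.+1%:Z) *+ 2 - 2 :> int.
Proof. rewrite mulr2n; lia. Qed.
Lemma ar2 (n : nat) : (n.+1%:Z) *+ 2 - 2 = n%:Z *+ 2 :> int.
Proof. rewrite !mulr2n; lia. Qed.
Lemma ar3 (x : int) : x <= 0 -> 0 <= (- x) *+ 2.
Proof. rewrite mulr2n; lia. Qed.
Lemma ar4 (x : int) : 0 < x *+ 2 -> x *+ 2 = (`|x|%N)%:Z *+ 2.
Proof. rewrite !mulr2n; lia. Qed.
Lemma ar5 (x : int) : 0 = x -> 0 <= - x.
Proof. lia. Qed.

Lemma dom_part (A : finType) (f : rprofile A -> {set A}) :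
  is_SCC f -> pairwise_scc f -> homogeneous f -> strategyproof f ->
  (forall R X, valid R -> is_TC R X -> X \subset f R) ->
  forall R, valid R -> dominant R (f R).
Proof.
move=> hS pw hom sp tc R vR; split; first exact: hS.
move=> z w zX wX; rewrite ltNge; apply/negP => gzw.
have [vR0 gR0] := kcopy_prop vR (isT : (0 < 2)%N).
have fR0 : f (kcopy 2 R) = f R by apply: hom.
set R0 := kcopy 2 R in vR0 gR0 fR0.
have [x0 _] := elt_of hS vR.
have TCf : forall S, valid S -> TCs S \subset f S by move=> S vS; apply: TC_f.
have wT : w \notin TCs R0 by apply: contra wX => wT; rewrite -fR0 (subsetP (TCf _ vR0)).
have gwz0 : 0 <= g R0 w z by rewrite gR0 g_anti; apply: ar3.
have zT : z \notin TCs R0 by apply: contra wT => zT; apply: TC_pred zT _.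
case/set0Pn: (TC_ne R0 x0) => t tT.
have tX : t \in f R by rewrite -fR0 (subsetP (TCf _ vR0)).
have tz : t != z by apply: contraNneq zT => <-.
have wt : w != t by apply: contraNneq wX => ->.
have wz : w != z by apply: contraNneq wX => ->.
have main : forall n S, valid S -> f S = f R -> t \in TCs S -> 0 <= g S w z ->
    g S t z = (n%:Z) *+ 2 -> False.
  elim => [|n IH] S vS fS tS gwz gtz.
    have zS : z \in TCs S by apply: TC_pred tS _; rewrite /e g_anti gtz mul0rn oppr0.
    have wS : w \in TCs S by apply: TC_pred zS _.
    by move: wX; rewrite -fS (subsetP (TCf _ vS)).
  have [S' [vS' gS']] := step_ex vS tz.
  have tS' : t \in TCs S'.
    apply: (subsetP (TC_mono _)) tS => x y.
    case: (boolP ((x == t) && (y == z))) => [/andP [/eqP -> /eqP ->]|nxy].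
      by rewrite gS' delta_ab // gtz => _; apply: ar1.
    by rewrite gS' => H; apply: addr_ge0 => //; apply: delta_ge2.
  have fS' : f S' = f S.
    apply: (lemK pw sp vS vS' tz gS').
    - exact: (subsetP (TCf _ vS) _ tS).
    - exact: (subsetP (TCf _ vS') _ tS').
    - by rewrite fS.
  apply: (IH S' vS'); rewrite ?fS' //.
    by rewrite gS' delta_0 ?addr0 // (negPf wt) (negPf wz).
  by rewrite gS' delta_ab // gtz ar2.
have g0 : 0 < g R0 t z by apply: TC_out.
apply: (main `|g R t z|%N R0 vR0 fR0 tT gwz0).
by rewrite gR0 in g0 *; apply: ar4.
Qed.

Lemma nested (A : finType) (R : rprofile A) P Q :
  dominant R P -> dominant R Q -> P \subset Q \/ Q \subset P.
Proof.
move=> [_ dP] [_ dQ]; case: (boolP (P \subset Q)) => [|/subsetPn [p pP pQ]]; first by left.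
right; apply/subsetP => q qQ; apply/negPn/negP => qP.
have h1 := dP p q pP qP; have h2 := dQ q p qQ pQ.
by move: h2; rewrite g_anti; rewrite oppr_gt0 ltNge (ltW h1).
Qed.

Lemma dom_step (A : finType) (R R' : rprofile A) X a b :
  dominant R X -> (forall x y, g R' x y = g R x y + delta a b x y) ->
  (forall x y, x \in X -> y \notin X -> 0 <= delta a b x y) -> dominant R' X.
Proof.
move=> [ne dX] HR' H; split => // x y xX yX.
by rewrite HR'; apply: ltr_wpDr; [apply: H | apply: dX].
Qed.

Lemma tie1 (A : finType) (f : rprofile A -> {set A}) :
  is_SCC f -> pairwise_scc f -> strategyproof f ->
  (forall R X, valid R -> is_TC R X -> X \subset f R) ->
  forall (X : {set A}) a b, a != b -> b \in X ->
  forall n S, valid S -> dominant S X -> X \subset f S -> a \in TCs S ->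
  g S a b = n%:Z *+ 2 ->
  exists S', [/\ valid S', f S' = f S &
    forall x y, g S' x y = if ((x == a) && (y == b)) || ((x == b) && (y == a)) then 0
                           else g S x y].
Proof.
move=> hS pw sp tc X a b ab bX; elim => [|n IH] S vS dX XS aT gab.
  exists S; split => // x y; case: ifP => // /orP [/andP [/eqP -> /eqP ->]|/andP [/eqP -> /eqP ->]].
    by rewrite gab mul0rn.
  by rewrite g_anti gab mul0rn oppr0.
have aX : a \in X by apply: (subsetP (TC_sub_dom dX)).
have [S' [vS' gS']] := step_ex vS ab.
have aT' : a \in TCs S'.
  apply: (subsetP (TC_mono _)) aT => x y.
  case: (boolP ((x == a) && (y == b))) => [/andP [/eqP -> /eqP ->]|nxy].
    by rewrite gS' delta_ab // gab => _; apply: ar1.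
  by rewrite gS' => H; apply: addr_ge0 => //; apply: delta_ge2.
have fS' : f S' = f S.
  apply: (lemK pw sp vS vS' ab gS').
  - exact: (subsetP (TC_f hS tc vS) _ aT).
  - exact: (subsetP (TC_f hS tc vS') _ aT').
  - exact: (subsetP XS).
have dX' : dominant S' X.
  apply: dom_step dX gS' _ => x y xX yX; rewrite delta_0 //.
  apply/negP => /orP [] /andP [_ /eqP E]; move: yX; by rewrite E ?aX ?bX.
have XS' : X \subset f S' by rewrite fS'.
have gab' : g S' a b = n%:Z *+ 2 by rewrite gS' delta_ab // gab ar2.
have [S'' [vS'' fS'' gS'']] := IH S' vS' dX' XS' aT' gab'.
exists S''; split => //; first by rewrite fS''.
move=> x y; rewrite gS'' gS'; case: ifP => // H; rewrite delta_0 ?addr0 //.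
by rewrite H.
Qed.

Definition NZ (A : finType) (X : {set A}) (S : rprofile A) : {set A * A} :=
  [set p : A * A | [&& p.1 \in X, p.2 \in X & g S p.1 p.2 != 0]].

Definition even_g (A : finType) (S : rprofile A) : Prop :=
  forall x y, exists k : int, g S x y = k *+ 2.

Lemma find_pair (A : finType) (S : rprofile A) (X : {set A}) :
  dominant S X -> NZ X S != set0 ->
  exists a b, [/\ a \in TCs S, b \in X & 0 < g S a b].
Proof.
move=> dX /set0Pn [[x y]]; rewrite inE /= => /and3P [xX yX nz].
case: (boolP [exists a, exists b, [&& a \in TCs S, b \in X & 0 < g S a b]]).
  by case/existsP => a /existsP [b /and3P [? ? ?]]; exists a, b.
rewrite negb_exists => /forallP H.
have H' : forall a b, a \in TCs S -> b \in X -> g S a b <= 0.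
  move=> a b aT bX; have := H a; rewrite negb_exists => /forallP /(_ b).
  by rewrite aT bX /= -leNgt.
have XT : X \subset TCs S.
  apply/subsetP => b bX; apply/negPn/negP => bT.
  case/set0Pn: (TC_ne S x) => a aT.
  by have := H' a b aT bX; rewrite leNgt (TC_out aT bT).
have h1 := H' x y (subsetP XT x xX) yX.
have h2 := H' y x (subsetP XT y yX) xX.
move: h2 nz; rewrite g_anti oppr_le0 => h2.
have E : g S x y = 0 by apply/le_anti; rewrite h1 h2.
by rewrite E eqxx.
Qed.

Lemma g_diag (A : finType) (R : rprofile A) x : g R x x = 0.
Proof. have := g_anti R x x; lia. Qed.

Lemma ar6 (k : int) : 0 < k *+ 2 -> k = (`|k|%N)%:Z.
Proof. rewrite mulr2n; lia. Qed.

Lemma tie (A : finType) (f : rprofile A -> {set A}) :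
  is_SCC f -> pairwise_scc f -> strategyproof f ->
  (forall R X, valid R -> is_TC R X -> X \subset f R) ->
  forall (X : {set A}) m S, (#|NZ X S| <= m)%N -> valid S -> dominant S X ->
  X \subset f S -> even_g S ->
  exists S', [/\ valid S', f S' = f S &
    forall x y, g S' x y = if (x \in X) && (y \in X) then 0 else g S x y].
Proof.
move=> hS pw sp tc X; elim => [|m IH] S cS vS dX XS eS;
  case: (eqVneq (NZ X S) set0) => [NZ0|NZn].
- exists S; split => // x y; case: ifP => // /andP [xX yX].
  apply/eqP; apply: contraT => nz.
  have : (x, y) \in NZ X S by rewrite inE /= xX yX nz.
  by rewrite NZ0 inE.
- by move: cS; rewrite leqn0 cards_eq0 (negPf NZn).
- exists S; split => // x y; case: ifP => // /andP [xX yX].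
  apply/eqP; apply: contraT => nz.
  have : (x, y) \in NZ X S by rewrite inE /= xX yX nz.
  by rewrite NZ0 inE.
have [a [b [aT bX gab]]] := find_pair dX NZn.
have aX : a \in X by apply: (subsetP (TC_sub_dom dX)).
have ab : a != b by apply: contraTneq gab => ->; rewrite g_diag ltxx.
have [k gk] := eS a b.
have kn : g S a b = (`|k|%N)%:Z *+ 2 by rewrite gk -ar6 // -gk.
have [S1 [vS1 fS1 gS1]] := tie1 hS pw sp tc ab bX vS dX XS aT kn.
have sub : NZ X S1 \proper NZ X S.
  apply/properP; split.
    apply/subsetP => [[x y]]; rewrite !inE /= gS1 => /and3P [xX yX].
    by case: ifP => // _ ->; rewrite xX yX.
  exists (a, b); first by rewrite inE /= aX bX gt_eqF.
  by rewrite inE /= gS1 !eqxx /= !andbF.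
have cS1 : (#|NZ X S1| <= m)%N by have := proper_card sub; lia.
have dX1 : dominant S1 X.
  case: dX => ne dX; split => // x y xX yX; rewrite gS1.
  case: ifP => [/orP [] /andP [_ /eqP E]|_]; last exact: dX.
    by move: yX; rewrite E bX.
  by move: yX; rewrite E aX.
have XS1 : X \subset f S1 by rewrite fS1.
have eS1 : even_g S1.
  by move=> x y; rewrite gS1; case: ifP => _; [exists 0; rewrite mul0rn | exact: eS].
have [S2 [vS2 fS2 gS2]] := IH S1 cS1 vS1 dX1 XS1 eS1.
exists S2; split => //; first by rewrite fS2.
move=> x y; rewrite gS2 gS1; case: ifP => // nin.
case: ifP => // /orP [] /andP [/eqP Ex /eqP Ey]; move: nin; by rewrite Ex Ey ?aX ?bX.
Qed.

Lemma ar7 (v : int) (n : nat) : v + n.+1%:Z *+ 2 + -2 = v + n%:Z *+ 2.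
Proof. rewrite !mulr2n; lia. Qed.

Lemma free1 (A : finType) (f : rprofile A -> {set A}) :
  is_SCC f -> pairwise_scc f -> homogeneous f -> strategyproof f ->
  (forall R X, valid R -> is_TC R X -> X \subset f R) ->
  forall (X : {set A}) a b (v : int), a != b -> a \notin X ->
  forall n S, valid S -> f S = X -> g S a b = v + n%:Z *+ 2 ->
  exists S', [/\ valid S', f S' = X &
    forall x y, g S' x y = if (x == a) && (y == b) then v
                           else if (x == b) && (y == a) then - v else g S x y].
Proof.
move=> hS pw hom sp tc X a b v ab aX; elim => [|n IH] S vS fS gab.
  exists S; split => // x y.
  case: ifP => [/andP [/eqP -> /eqP ->]|_]; first by rewrite gab mul0rn addr0.
  case: ifP => [/andP [/eqP -> /eqP ->]|_] //.
  by rewrite g_anti gab mul0rn addr0.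
have [S' [vS' gS']] := step_ex vS ab.
have dP := dom_part hS pw hom sp tc vS.
have dP' : dominant S' (f S).
  apply: dom_step dP gS' _ => x y xX yX; apply: delta_ge.
  by apply: contraNneq aX => <-; rewrite -fS.
have fS' : f S' = f S.
  apply: (lemM1 pw sp vS vS' ab gS'); first by rewrite fS.
  exact: nested (dom_part hS pw hom sp tc vS') dP'.
have gab' : g S' a b = v + n%:Z *+ 2 by rewrite gS' delta_ab // gab ar7.
have [S'' [vS'' fS'' gS'']] := IH S' vS' (etrans fS' fS) gab'.
exists S''; split => // x y; rewrite gS'' gS'.
case: ifP => // H1; case: ifP => // H2.
by rewrite delta_0 ?addr0 // H1 H2.
Qed.

Definition DF (A : finType) (S T : rprofile A) : {set A * A} :=
  [set p : A * A | g S p.1 p.2 != g T p.1 p.2].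

Lemma ar8 (s t k : int) : s - t = k *+ 2 -> t < s -> s = t + (`|k|%N)%:Z *+ 2.
Proof. rewrite !mulr2n; lia. Qed.

Lemma find_pair2 (A : finType) (S T : rprofile A) (X : {set A}) :
  (forall x y, x \in X -> y \in X -> g T x y = g S x y) ->
  (forall w x, w \notin X -> x \in X -> g T w x <= g S w x) ->
  DF S T != set0 -> exists a b, [/\ a \notin X & g T a b < g S a b].
Proof.
move=> inn out /set0Pn [[x y]]; rewrite inE /= => nz.
case: (boolP [exists p : A * A, (p.1 \notin X) && (g T p.1 p.2 < g S p.1 p.2)]).
  by case/existsP => [[a b]] /andP [? ?]; exists a, b.
rewrite negb_exists => /forallP H.
have H' : forall a b, g T a b < g S a b -> a \in X.
  by move=> a b lt; have := H (a, b); rewrite /= lt andbT negbK.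
case: (ltgtP (g T x y) (g S x y)) => [lt|gt|eq]; last by rewrite eq eqxx in nz.
- have xX := H' _ _ lt; case: (boolP (y \in X)) => yX.
    by rewrite (inn x y xX yX) ltxx in lt.
  by have := out y x yX xX; rewrite (g_anti T x y) (g_anti S x y) lerN2 leNgt lt.
- have yX : y \in X by apply: (H' y x); rewrite (g_anti T x y) (g_anti S x y) ltrN2.
  case: (boolP (x \in X)) => xX.
    by rewrite (inn x y xX yX) ltxx in gt.
  by have := out x y xX yX; rewrite leNgt gt.
Qed.

Lemma free (A : finType) (f : rprofile A -> {set A}) :
  is_SCC f -> pairwise_scc f -> homogeneous f -> strategyproof f ->
  (forall R X, valid R -> is_TC R X -> X \subset f R) ->
  forall (X : {set A}) m S T, (#|DF S T| <= m)%N -> valid S -> valid T -> f S = X ->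
  (forall x y, x \in X -> y \in X -> g T x y = g S x y) ->
  (forall w x, w \notin X -> x \in X -> g T w x <= g S w x) ->
  (forall x y, exists k : int, g S x y - g T x y = k *+ 2) -> f T = X.
Proof.
move=> hS pw hom sp tc X; elim => [|m IH] S T cS vS vT fS inn out ev;
  case: (eqVneq (DF S T) set0) => [D0|Dn].
- rewrite -fS; apply: pw => // x y; apply/eqP; apply: contraT => nz.
  have : (x, y) \in DF S T by rewrite inE /= eq_sym.
  by rewrite D0 inE.
- by move: cS; rewrite leqn0 cards_eq0 (negPf Dn).
- rewrite -fS; apply: pw => // x y; apply/eqP; apply: contraT => nz.
  have : (x, y) \in DF S T by rewrite inE /= eq_sym.
  by rewrite D0 inE.
have [a [b [aX lt]]] := find_pair2 inn out Dn.
have ab : a != b by apply: contraTneq lt => ->; rewrite !g_diag ltxx.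
have [k gk] := ev a b.
have gab := ar8 gk lt.
have [S1 [vS1 fS1 gS1]] := free1 hS pw hom sp tc ab aX vS fS gab.
have gba : - g T a b = g T b a by rewrite g_anti opprK.
have sub : DF S1 T \proper DF S T.
  apply/properP; split.
    apply/subsetP => [[x y]]; rewrite !inE /= gS1.
    case: ifP => [/andP [/eqP -> /eqP ->]|_]; first by rewrite eqxx.
    by case: ifP => [/andP [/eqP -> /eqP ->]|//]; rewrite gba eqxx.
  exists (a, b); first by rewrite inE /= gt_eqF.
  by rewrite inE /= gS1 !eqxx.
have cS1 : (#|DF S1 T| <= m)%N by have := proper_card sub; lia.
apply: (IH S1 T cS1 vS1 vT fS1).
- move=> x y xX yX; rewrite gS1 inn //.
  case: ifP => [/andP [/eqP E _]|_]; first by move: aX; rewrite -E xX.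
  by case: ifP => [/andP [_ /eqP E]|//]; move: aX; rewrite -E yX.
- move=> w x wX xX; rewrite gS1.
  case: ifP => [/andP [/eqP -> /eqP ->]|_]; first exact: lexx.
  case: ifP => [/andP [_ /eqP E]|_]; first by move: aX; rewrite -E xX.
  exact: out.
- move=> x y; rewrite gS1.
  case: ifP => [/andP [/eqP -> /eqP ->]|_]; first by exists 0; rewrite subrr mul0rn.
  case: ifP => [/andP [/eqP -> /eqP ->]|_]; first by exists 0; rewrite gba subrr mul0rn.
  exact: ev.
Qed.
Lemma ar9 (g s : int) (K : nat) : g <= -1 -> (`|s|%N < K)%N -> (g *+ 2) *+ K <= s.
Proof. move=> h1 h2; rewrite -mulr_natr mulr2n; nia. Qed.
Lemma ar10 (a b : int) (K : nat) : exists k : int, a *+ 2 - (b *+ 2) *+ K = k *+ 2.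
Proof. exists (a - b *+ K); rewrite mulrnBl -mulrnA -mulrnA mulnC. by []. Qed.

Lemma robust_part (A : finType) (f : rprofile A -> {set A}) :
  is_SCC f -> pairwise_scc f -> homogeneous f -> strategyproof f ->
  (forall R X, valid R -> is_TC R X -> X \subset f R) -> robust f.
Proof.
move=> hS pw hom sp tc R R' vR vR' dXR'.
apply: contraT => nsub; exfalso.
have dY := dom_part hS pw hom sp tc vR'.
have XY : f R \subset f R'.
  by case: (nested dXR' dY) => // H; rewrite H in nsub.
have XnY : f R != f R' by apply: contraNneq nsub => <-.
have [vR0 gR0] := kcopy_prop vR (isT : (0 < 2)%N).
have fR0 : f (kcopy 2 R) = f R by apply: hom.
have [vR0' gR0'] := kcopy_prop vR' (isT : (0 < 2)%N).
have fR0' : f (kcopy 2 R') = f R' by apply: hom.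
set R0 := kcopy 2 R in vR0 gR0 fR0; set R0' := kcopy 2 R' in vR0' gR0' fR0'.
set X := f R in XY XnY fR0 dXR' nsub.
have dX0 : dominant R0 X by rewrite -fR0; apply: dom_part.
have dX0' : dominant R0' X.
  case: dXR' => ne d; split => // x y xX yX; rewrite gR0'.
  by apply: mulrn_wgt0 => //; apply: d.
have e0 : even_g R0 by move=> x y; exists (g R x y).
have e0' : even_g R0' by move=> x y; exists (g R' x y).
have XR0 : X \subset f R0 by rewrite fR0.
have [S1 [vS1 fS1 gS1]] := tie hS pw sp tc (leqnn _) vR0 dX0 XR0 e0.
have XR0' : X \subset f R0' by rewrite fR0'.
have [S2 [vS2 fS2 gS2]] := tie hS pw sp tc (leqnn _) vR0' dX0' XR0' e0'.
set K := (\max_(p : A * A) `|g S1 p.1 p.2|%N).+1.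
have [vS3 gS3] := kcopy_prop vS2 (isT : (0 < K)%N).
have fS3 : f (kcopy K S2) = f R' by rewrite hom // fS2 fR0'.
have : f (kcopy K S2) = X.
  apply: (free hS pw hom sp tc (leqnn _) vS1 vS3); first by rewrite fS1 fR0.
  - move=> x y xX yX; rewrite gS3 gS2 gS1 xX yX /=; exact: mul0rn.
  - move=> w x wX xX; rewrite gS3 gS2 gS1 (negPf wX) /= gR0'.
    apply: ar9.
      case: dXR' => _ d; have := d x w xX wX; rewrite g_anti oppr_gt0.
      move=> h; move: h; clear; lia.
    rewrite ltnS -/(g R0 w x).
    have := @leq_bigmax _ (fun p : A * A => `|g S1 p.1 p.2|%N) (w, x).
    by rewrite /= gS1 (negPf wX).
  - move=> x y; rewrite gS3 gS2 gS1; case: ifP => _.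
      by exists 0; rewrite mul0rn subr0.
    rewrite gR0 gR0'; exact: ar10.
by rewrite fS3 => E; rewrite E eqxx in XnY.
Qed.

Theorem lemma6 (A : finType) (f : rprofile A -> {set A}) :
  is_SCC f -> pairwise_scc f -> strongly_condorcet_consistent f ->
  homogeneous f -> strategyproof f ->
  (forall R X, valid R -> is_TC R X -> X \subset f R) ->
  dominant_set_rule f /\ robust f.
Proof.
move=> hS pw _ hom sp tc; split.
  by move=> R vR; apply: dom_part.
exact: robust_part.
Qed.
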